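(* Let $V_0>0$, $\alpha_1,\alpha_2>0$, $\delta_1\in\mathbb R$, and let $\gamma_1 = 1+\frac{1}{\mu}$, $\gamma_2 = 1-\frac{1}{\mu}$ for some $\mu>1$. Define \[ I \coloneqq \int_{V_0}^{0}\frac{dV}{-\alpha_1V^{\gamma_1}-\alpha_2V^{\gamma_2}+\delta_1V}. \] Then: (i) If $0\leq \delta_1<2\sqrt{\alpha_1\alpha_2}$, then \[ I\leq \frac{\mu}{\alpha_1k_1}\left(\frac{\pi}{2}-\tan^{-1}k_2\right), \] where $k_1 = \sqrt{\frac{4\alpha_1\alpha_2-\delta_1^2}{4\alpha_1^2}}$ and $k_2 = -\frac{\delta_1}{\sqrt{4\alpha_1\alpha_2-\delta_1^2}}$. (ii) If $\delta_1\geq 2\sqrt{\alpha_1\alpha_2}$ and $V_0^{1/\mu}\leq k\,\frac{\delta_1-\sqrt{\delta_1^2-4\alpha_1\alpha_2}}{2\alpha_1}$ for some $0<k<1$, then \[ I \leq \frac{\mu k}{(1-k)\sqrt{\alpha_1\alpha_2}}. \]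
   Context: $\tan^{-1}$ denotes the principal branch of the inverse tangent, with values in $(-\pi/2,\pi/2)$. *)

(* Defs.v *)
From HB Require Import structures.
From mathcomp Require Import all_boot all_order all_algebra.
From mathcomp Require Import all_classical all_reals all_analysis.
Set Implicit Arguments. Unset Strict Implicit. Unset Printing Implicit Defensive.
Import Order.TTheory GRing.Theory Num.Theory.
Import numFieldNormedType.Exports.
Local Open Scope classical_set_scope.
Local Open Scope ring_scope.

(* I = \int_{V0}^{0} dV / (-a1 V^g1 - a2 V^g2 + d1 V), i.e. minus the
   (Lebesgue) integral over ]0, V0] of the integrand; value in \bar R. *)
Definition integralI {R : realType} (V0 a1 a2 d1 g1 g2 : R) : \bar R :=
  (- \int[@lebesgue_measure R]_(V in `]0%R, V0])
        ((- a1 * V `^ g1 - a2 * V `^ g2 + d1 * V)^-1)%:E)%E.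

(* Main.v *)
Require Import Defs.
From HB Require Import structures.
From mathcomp Require Import all_boot all_order all_algebra.
From mathcomp Require Import all_classical all_reals all_analysis.
From mathcomp Require Import ring lra.
Import Order.TTheory GRing.Theory Num.Theory.
Local Open Scope ring_scope.

Module Helpers.
Import numFieldNormedType.Exports.
Local Open Scope classical_set_scope.
Local Open Scope ring_scope.

Section Key.
Context {R : realType}.
Notation mu := (@lebesgue_measure R).

Lemma key (f g G : R -> R) (V0 C : R) :
 0 < V0 ->
 (forall x, 0 < x <= V0 -> f x <= 0) ->
 (forall x, 0 < x <= V0 -> - f x <= g x) ->
 (forall x, 0 < x <= V0 -> {for x, continuous f}) ->
 (forall x, 0 < x <= V0 -> {for x, continuous g}) ->
 (forall x, 0 < x <= V0 -> is_derive x 1 G (g x)) ->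
 (forall e, 0 < e < V0 -> G V0 - G e <= C) ->
 ((- \int[mu]_(x in `]0%R, V0]) (f x)%:E) <= C%:E)%E.
Proof.
move=> V0p f0 fg cf cg dG GC.
pose F := fun n : nat => `[V0 / n.+2%:R, V0]%classic.
have Fsub n : F n `<=` `]0, V0].
  move=> x; rewrite /F /= !in_itv /= => /andP[h1 ->]; rewrite andbT.
  by apply: lt_le_trans h1; rewrite divr_gt0.
have eqU : `]0, V0]%classic = \bigcup_n F n.
  apply/seteqP; split; last by move=> x [n _ /Fsub].
  move=> x /=; rewrite in_itv /= => /andP[x0 xV].
  have := @archi_boundP R (V0 / x) (ltW (divr_gt0 V0p x0)).
  set n := Num.Def.archi_bound _ => hn.
  exists n => //=; rewrite /F /= in_itv /= xV andbT.
  rewrite ler_pdivrMr ?ltr0n // -ler_pdivrMl //.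
  idtac.
  rewrite mulrC; apply: (le_trans (ltW hn)); rewrite ler_nat; exact: leq_trans (leqnSn n) (leqnSn n.+1).
have nd : {homo F : n m / (n <= m)%N >-> (n <= m)%O}.
  move=> n m nm; apply/subsetPset => x; rewrite /F /= !in_itv /= => /andP[h ->].
  rewrite andbT; apply: le_trans h; rewrite ler_pM2l // lef_pV2 ?posrE ?ltr0n //.
  by rewrite ler_nat.
have mF n : measurable (F n) by exact: measurable_itv.
have mf : measurable_fun `]0, V0] f.
  apply: measurable_realfun.subspace_continuous_measurable_fun => //.
  apply: continuous_in_subspaceT => x; rewrite inE /= in_itv /= => h; exact: cf.
have mg : measurable_fun `]0, V0] g.
  apply: measurable_realfun.subspace_continuous_measurable_fun => //.
  apply: continuous_in_subspaceT => x; rewrite inE /= in_itv /= => h; exact: cg.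
have hc : (\int[mu]_(x in F i) (EFin \o f) x)%E @[i --> \oo] -->
     (\int[mu]_(x in \bigcup_i F i) (EFin \o f) x)%E.
  apply: le0_nondecreasing_set_cvg_integral => //.
  - by move=> n; apply/measurable_realfun.measurable_EFinP; apply: measurable_funS mf.
  - by move=> n x /Fsub /=; rewrite in_itv /= lee_fin; exact: f0.
move: hc.
rewrite -eqU => /cvgeN hcvg.
rewrite -(cvg_lim _ hcvg) //.
apply: lime_le; first by apply/cvg_ex; eexists; exact: hcvg.
near=> n.
have e0 : 0 < V0 / n.+2%:R by rewrite divr_gt0.
have eV : V0 / n.+2%:R < V0.
  by rewrite ltr_pdivrMr ?ltr0n // ltr_pMr // ltr1n.
have FnE : F n = `[V0 / n.+2%:R, V0]%classic by [].
have inI x : F n x -> 0 < x <= V0.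
  by move=> /Fsub /=; rewrite in_itv.
have mfn : measurable_fun (F n) f by apply: measurable_funS mf.
have mgn : measurable_fun (F n) g by apply: measurable_funS mg.
have -> : (- (\int[mu]_(x in F n) (EFin \o f) x) = \int[mu]_(x in F n) (- f x)%:E)%E.
  rewrite -integralN /=; first by apply: eq_integral => x _; rewrite EFinN.
  apply: fin_num_adde_defr; rewrite integral0_eq// => x Fnx.
  have hf : forall y, F n y -> ((EFin \o f) y <= 0)%E.
    by move=> y Fy; have h := inI y Fy; rewrite /= lee_fin f0.
  by rewrite (le0_funeposE hf) ?inE.
apply: (@le_trans _ _ (\int[mu]_(x in F n) (g x)%:E)%E).
  apply: ge0_le_integral => //.
  - exact: mF.
  - by move=> x Fx; have h := inI x Fx; rewrite lee_fin oppr_ge0 f0.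
  - by apply/measurable_realfun.measurable_EFinP; apply: measurableT_comp.
  - by apply/measurable_realfun.measurable_EFinP.
  - by move=> x Fx; have h := inI x Fx; rewrite lee_fin fg.
rewrite FnE (@continuous_FTC2 _ g G) //.
- by rewrite -EFinB lee_fin GC // e0.
- apply: continuous_in_subspaceT => x; rewrite inE /= in_itv /= => /andP[h1 h2].
  by apply: cg; rewrite h2 (lt_le_trans e0 h1).
- have cG x : 0 < x <= V0 -> {for x, continuous G}.
    move=> h; apply/differentiable_continuous/derivable1_diffP.
    by have [] := dG x h.
  split.
  + move=> x; rewrite in_itv /= => /andP[h1 h2].
    have hx : 0 < x <= V0 by rewrite (lt_trans e0 h1) (ltW h2).
    by have [] := dG x hx.
  + by apply: cvg_at_right_filter; apply: cG; rewrite e0 (ltW eV).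
  + by apply: cvg_at_left_filter; apply: cG; rewrite V0p lexx.
- move=> x; rewrite in_itv /= => /andP[h1 h2].
  have hx : 0 < x <= V0 by rewrite (lt_trans e0 h1) (ltW h2).
  by rewrite derive1E; have [_ ->] := dG x hx.
Unshelve. all: by end_near.
Qed.

Implicit Types (f g : R -> R) (x df dg : R).

Lemma isdD {f g x df dg} : is_derive x 1 f df -> is_derive x 1 g dg ->
  is_derive x 1 (fun y => f y + g y) (df + dg).
Proof. move=> hf hg; exact: is_deriveD. Qed.
Lemma isdB {f g x df dg} : is_derive x 1 f df -> is_derive x 1 g dg ->
  is_derive x 1 (fun y => f y - g y) (df - dg).
Proof. move=> hf hg; exact: is_deriveB. Qed.
Lemma isdM {f g x df dg} : is_derive x 1 f df -> is_derive x 1 g dg ->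
  is_derive x 1 (fun y => f y * g y) (f x * dg + g x * df).
Proof. move=> hf hg; exact: is_deriveM. Qed.
Lemma isdC x (k : R) : is_derive x 1 (fun _ : R => k) 0.
Proof. exact: is_derive_cst. Qed.
Lemma isdId x : is_derive x 1 (fun y : R => y) 1.
Proof. exact: is_derive_id. Qed.
Lemma isdV {f x df} : f x != 0 -> is_derive x 1 f df ->
  is_derive x 1 (fun y => (f y)^-1) (- (f x) ^- 2 * df).
Proof. move=> h hf; exact: is_deriveV. Qed.
Lemma isdcomp {f g x df dg} : is_derive x 1 f df -> is_derive (f x) 1 g dg ->
  is_derive x 1 (fun y => g (f y)) (dg * df).
Proof. move=> hf hg; exact: is_derive1_comp. Qed.
Lemma isdpow x (a : R) : 0 < x -> is_derive x 1 (fun y => y `^ a) (a * x `^ (a - 1)).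
Proof. move=> h; exact: is_derive1_powR. Qed.
Lemma isdatan x : is_derive x 1 (@atan R) (1 + x ^+ 2)^-1.
Proof. exact: is_derive1_atan. Qed.
Lemma isd_cont {f x df} : is_derive x 1 f df -> {for x, continuous f}.
Proof. by move=> [hd _]; apply/differentiable_continuous/derivable1_diffP. Qed.


Lemma isdN {f x df} : is_derive x 1 f df -> is_derive x 1 (fun y => - f y) (- df).
Proof. move=> hf; exact: is_deriveN. Qed.

Lemma den_der (a1 a2 d1 g1 g2 x : R) : 0 < x ->
  derivable (fun V : R => - a1 * V `^ g1 - a2 * V `^ g2 + d1 * V) x 1.
Proof.
move=> x0.
by have [] := isdD (isdB (isdM (isdC x (-a1)) (isdpow x g1 x0))
   (isdM (isdC x a2) (isdpow x g2 x0))) (isdM (isdC x d1) (isdId x)).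
Qed.

Lemma inv_cont (h : R -> R) x : h x != 0 -> derivable h x 1 ->
  {for x, continuous (fun y => (h y)^-1)}.
Proof.
move=> h0 hd.
exact: (isd_cont (isdV h0 (@DeriveDef _ _ _ _ _ _ _ hd erefl))).
Qed.

Lemma Ninv_cont (h : R -> R) x : h x != 0 -> derivable h x 1 ->
  {for x, continuous (fun y => - (h y)^-1)}.
Proof.
move=> h0 hd.
exact: (isd_cont (isdN (isdV h0 (@DeriveDef _ _ _ _ _ _ _ hd erefl)))).
Qed.
End Key.

Lemma part1 (R : realType) (V0 a1 a2 d1 mu : R) :
  0 < V0 -> 0 < a1 -> 0 < a2 -> 1 < mu -> 0 <= d1 -> d1 < 2 * Num.sqrt (a1 * a2) ->
  (integralI V0 a1 a2 d1 (1 + mu^-1) (1 - mu^-1) <=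
   (mu / (a1 * Num.sqrt ((4 * a1 * a2 - d1 ^+ 2) / (4 * a1 ^+ 2))) *
     (pi / 2 - atan (- (d1 / Num.sqrt (4 * a1 * a2 - d1 ^+ 2)))))%:E)%E.
Proof.
move=> V0p a1p a2p mu1 d0 dlt.
have D0 : 0 < 4 * a1 * a2 - d1 ^+ 2.
  have hs := sqr_sqrtr (ltW (mulr_gt0 a1p a2p)).
  have s0 := sqrtr_ge0 (a1 * a2).
  nra.
set D := 4 * a1 * a2 - d1 ^+ 2 in D0 *.
have a0 : 0 < 4 * a1 ^+ 2 by rewrite mulr_gt0 // exprn_gt0.
set k1 := Num.sqrt (D / (4 * a1 ^+ 2)).
have k1p : 0 < k1 by rewrite sqrtr_gt0 divr_gt0.
have k1sq : k1 ^+ 2 = D / (4 * a1 ^+ 2) by rewrite sqr_sqrtr // ltW // divr_gt0.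
have a2E : a2 = (k1 ^+ 2 * (4 * a1 ^+ 2) + d1 ^+ 2) / (4 * a1).
  by rewrite k1sq /D; field; rewrite gt_eqF.
have mu0 : 0 < mu by apply: lt_trans mu1.
set c := d1 / (2 * a1).
set A := mu / (a1 * k1).
have A0 : 0 < A by rewrite divr_gt0 // mulr_gt0.
have pw x : 0 < x -> x `^ (1 + mu^-1) = x * x `^ mu^-1.
  by move=> x0; rewrite powRD ?powRr1 ?ltW // (gt_eqF x0) implybT.
have pw2 x : 0 < x -> x `^ (1 - mu^-1) = x / x `^ mu^-1.
  by move=> x0; rewrite powRB ?powRr1 ?ltW // (gt_eqF x0) implybT.
have pw3 x : 0 < x -> x `^ (mu^-1 - 1) = x `^ mu^-1 / x.
  by move=> x0; rewrite powRB ?powRr1 ?ltW // (gt_eqF x0) implybT.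
have denE x : 0 < x -> - a1 * x `^ (1 + mu^-1) - a2 * x `^ (1 - mu^-1) + d1 * x
    = - (x * a1 / x `^ mu^-1) * ((x `^ mu^-1 - c) ^+ 2 + k1 ^+ 2).
  move=> x0; have p0 := powR_gt0 (mu^-1) x0.
  by rewrite pw // pw2 // a2E /c; field; rewrite !gt_eqF.
have Q0 x : 0 < (x `^ mu^-1 - c) ^+ 2 + k1 ^+ 2 by rewrite ltr_wpDl ?sqr_ge0 ?exprn_gt0.
have den_lt0 x : 0 < x -> - a1 * x `^ (1 + mu^-1) - a2 * x `^ (1 - mu^-1) + d1 * x < 0.
  move=> x0; have p0 := powR_gt0 (mu^-1) x0.
  by rewrite denE // mulNr oppr_lt0 mulr_gt0 // divr_gt0 // mulr_gt0.
rewrite /integralI.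
apply: (@key _ _ (fun V => - (- a1 * V `^ (1 + mu^-1) - a2 * V `^ (1 - mu^-1) + d1 * V)^-1)
   (fun V => A * atan ((V `^ mu^-1 - c) / k1))) => //.
- by move=> x /andP[x0 _]; rewrite invr_le0 ltW // den_lt0.
- move=> x /andP[x0 _]; apply: inv_cont; first by rewrite lt_eqF // den_lt0.
  exact: den_der.
- move=> x /andP[x0 _]; apply: Ninv_cont; first by rewrite lt_eqF // den_lt0.
  exact: den_der.
- move=> x /andP[x0 _]; have p0 := powR_gt0 (mu^-1) x0.
  apply: is_derive_eq.
  + exact: (isdM (isdC x A) (isdcomp (isdM (isdB (isdpow x (mu^-1) x0) (isdC x c)) (isdC x k1^-1)) (isdatan _))).
  + rewrite denE // pw3 //.
    have h1 : 1 + ((x `^ mu^-1 - c) * k1^-1) ^+ 2 = ((x `^ mu^-1 - c) ^+ 2 + k1 ^+ 2) / k1 ^+ 2.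
      by field; rewrite gt_eqF.
    rewrite h1; move: (Q0 x); set Q := (_ ^+ 2 + k1 ^+ 2) => Qp.
    by rewrite /A; field; rewrite !gt_eqF.
- move=> e /andP[e0 eV]; have p0 := powR_gt0 (mu^-1) e0.
  have k2E : - (d1 / Num.sqrt D) = - c / k1.
    rewrite /k1 sqrtrM ?ltW // sqrtrV ?ltW // (_ : 4 * a1 ^+ 2 = (2 * a1) ^+ 2); last by ring.
    rewrite sqrtr_sqr ger0_norm ?mulr_ge0 ?ltW //.
    have sD : 0 < Num.sqrt D by rewrite sqrtr_gt0.
    by rewrite /c; field; rewrite !gt_eqF.
  rewrite k2E -mulrBr ler_pM2l //.
  apply: lerB; first exact/ltW/atan_ltpi2.
  apply: le_atan; rewrite -subr_ge0.
  have -> : (e `^ mu^-1 - c) / k1 - - c / k1 = e `^ mu^-1 / k1 by field; rewrite gt_eqF.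
  by rewrite divr_ge0 // ltW.
Qed.

Lemma part2 (R : realType) (V0 a1 a2 d1 mu k : R) :
  0 < V0 -> 0 < a1 -> 0 < a2 -> 1 < mu -> 0 < k < 1 ->
  2 * Num.sqrt (a1 * a2) <= d1 ->
  V0 `^ (mu^-1) <= k * ((d1 - Num.sqrt (d1 ^+ 2 - 4 * a1 * a2)) / (2 * a1)) ->
  (integralI V0 a1 a2 d1 (1 + mu^-1) (1 - mu^-1) <=
     (mu * k / ((1 - k) * Num.sqrt (a1 * a2)))%:E)%E.
Proof.
move=> V0p a1p a2p mu1 /andP[k0 k1] dge hV0.
have sa0 : 0 < Num.sqrt (a1 * a2) by rewrite sqrtr_gt0 mulr_gt0.
have saE := sqr_sqrtr (ltW (mulr_gt0 a1p a2p)).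
set sa := Num.sqrt (a1 * a2) in sa0 saE dge *.
have d0 : 0 < d1 by apply: lt_le_trans dge; rewrite mulr_gt0.
have D0 : 0 <= d1 ^+ 2 - 4 * a1 * a2 by nra.
have sE := sqr_sqrtr D0.
have s0 := sqrtr_ge0 (d1 ^+ 2 - 4 * a1 * a2).
set s := Num.sqrt _ in sE s0 hV0 *.
have sd : s < d1 by nra.
have a10 : 0 < 2 * a1 by rewrite mulr_gt0.
set r1 := (d1 - s) / (2 * a1) in hV0 *.
set r2 := (d1 + s) / (2 * a1).
have r1p : 0 < r1 by rewrite divr_gt0 // subr_gt0.
have r12 : r1 <= r2 by rewrite ler_pM2r ?invr_gt0 //; lra.
have r2p : 0 < r2 by apply: lt_le_trans r12.
have a2E : a2 = a1 * r1 * r2.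
  rewrite /r1 /r2.
  transitivity ((d1 ^+ 2 - s ^+ 2) / (4 * a1)); last by field; rewrite gt_eqF.
  by rewrite sE; field; rewrite gt_eqF.
have d1E : d1 = a1 * (r1 + r2) by rewrite /r1 /r2; field; rewrite gt_eqF.
have mu0 : 0 < mu by apply: lt_trans mu1.
have pw x : 0 < x -> x `^ (1 + mu^-1) = x * x `^ mu^-1.
  by move=> x0; rewrite powRD ?powRr1 ?ltW // (gt_eqF x0) implybT.
have pw2 x : 0 < x -> x `^ (1 - mu^-1) = x / x `^ mu^-1.
  by move=> x0; rewrite powRB ?powRr1 ?ltW // (gt_eqF x0) implybT.
have pw3 x : 0 < x -> x `^ (mu^-1 - 1) = x `^ mu^-1 / x.
  by move=> x0; rewrite powRB ?powRr1 ?ltW // (gt_eqF x0) implybT.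
have p0r1 : V0 `^ mu^-1 < r1.
  apply: le_lt_trans hV0 _; rewrite gtr_pMl //.
have plt x : 0 < x <= V0 -> x `^ mu^-1 < r1.
  move=> /andP[x0 xV]; apply: le_lt_trans p0r1.
  by apply: ge0_ler_powR; rewrite ?invr_ge0 ?nnegrE ?(ltW x0) ?(ltW V0p) ?(ltW mu0).
have denE x : 0 < x -> - a1 * x `^ (1 + mu^-1) - a2 * x `^ (1 - mu^-1) + d1 * x
    = - (x * a1 / x `^ mu^-1) * ((r1 - x `^ mu^-1) * (r2 - x `^ mu^-1)).
  move=> x0; have p0 := powR_gt0 (mu^-1) x0.
  rewrite pw // pw2 // a2E d1E; field; by rewrite !gt_eqF.
have den_lt0 x : 0 < x <= V0 -> - a1 * x `^ (1 + mu^-1) - a2 * x `^ (1 - mu^-1) + d1 * x < 0.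
  move=> /[dup] /andP[x0 _] /plt xr; have p0 := powR_gt0 (mu^-1) x0.
  rewrite denE // mulNr oppr_lt0 mulr_gt0 // ?divr_gt0 ?mulr_gt0 // subr_gt0 //.
  exact: lt_le_trans r12.
set B := mu * r1 / (a1 * r2).
have B0 : 0 < B by apply: divr_gt0; apply: mulr_gt0.
have Bdef : B = mu * r1 / (a1 * r2) by [].
have r2def : r2 = (d1 + s) / (2 * a1) by [].
clearbody sa s r1 r2 B.
rewrite /integralI.
apply: (@key _ _
   (fun V => B * ((r1 - V `^ mu^-1)^-1 * (r1 - V `^ mu^-1)^-1 * (mu^-1 * V `^ (mu^-1 - 1))))
   (fun V => B * (r1 - V `^ mu^-1)^-1)).
- exact: V0p.
- by move=> x hx; rewrite invr_le0 ltW // den_lt0.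
- move=> x hx; have /andP[x0 _] := hx; have xr := plt x hx.
  have p0 := powR_gt0 (mu^-1) x0.
  have r2x : 0 < r2 - x `^ mu^-1 by rewrite subr_gt0 (lt_le_trans xr).
  have r1x : 0 < r1 - x `^ mu^-1 by rewrite subr_gt0.
  rewrite -subr_ge0 denE // pw3 //.
  have -> : B * ((r1 - x `^ mu^-1)^-1 * (r1 - x `^ mu^-1)^-1 * (mu^-1 * (x `^ mu^-1 / x))) -
     - (- (x * a1 / x `^ mu^-1) * ((r1 - x `^ mu^-1) * (r2 - x `^ mu^-1)))^-1
     = x `^ mu^-1 ^+ 2 * (r2 - r1) / (a1 * x * (r1 - x `^ mu^-1) ^+ 2 * r2 * (r2 - x `^ mu^-1)).
    by rewrite Bdef; field; rewrite !gt_eqF.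
  apply: divr_ge0; first by rewrite mulr_ge0 ?sqr_ge0 ?subr_ge0.
  apply/ltW; apply: mulr_gt0 => //; apply: mulr_gt0 => //.
  by apply: mulr_gt0; [exact: mulr_gt0 | exact: exprn_gt0].
- move=> x hx; have /andP[x0 _] := hx.
  apply: inv_cont; first by rewrite lt_eqF // den_lt0.
  exact: den_der.
- move=> x hx; have /andP[x0 _] := hx; have xr := plt x hx.
  have r1x : r1 - x `^ mu^-1 != 0 by rewrite gt_eqF // subr_gt0.
  have dr := isdB (isdC x r1) (isdpow x (mu^-1) x0).
  have dv := isdV (f := fun y => r1 - y `^ mu^-1) r1x dr.
  exact: (isd_cont (isdM (isdC x B) (isdM (isdM dv dv)
     (isdM (isdC x mu^-1) (isdpow x (mu^-1 - 1) x0))))).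
- move=> x hx; have /andP[x0 _] := hx; have xr := plt x hx.
  have r1x : r1 - x `^ mu^-1 != 0 by rewrite gt_eqF // subr_gt0.
  apply: is_derive_eq.
  + have dr := isdB (isdC x r1) (isdpow x (mu^-1) x0).
    exact: (isdM (isdC x B) (isdV (f := fun y => r1 - y `^ mu^-1) r1x dr)).
  + by rewrite /= mulr0 addr0 sub0r mulrN mulNr opprK expr2 invfM.
- move=> e /andP[e0 eV].
  have pe := powR_gt0 (mu^-1) e0.
  have p0 := powR_gt0 (mu^-1) V0p.
  have er : e `^ mu^-1 < r1 by apply: plt; rewrite e0 ltW.
  set p := V0 `^ mu^-1 in p0 p0r1 hV0 *.
  set q := e `^ mu^-1 in pe er *.
  have h1 : B * (r1 - p)^-1 - B * (r1 - q)^-1 <= B * (r1 - p)^-1 - B * r1^-1.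
    rewrite lerD2l lerN2 ler_pM2l // lef_pV2 ?posrE ?subr_gt0 //.
    by rewrite gerBl ltW.
  apply: (le_trans h1).
  have -> : B * (r1 - p)^-1 - B * r1^-1 = mu / (a1 * r2) * (p / (r1 - p)).
    by rewrite Bdef; field; rewrite !gt_eqF ?subr_gt0.
  have -> : mu * k / ((1 - k) * sa) = mu / sa * (k / (1 - k)).
    by field; rewrite !gt_eqF ?subr_gt0.
  apply: ler_pM.
  + by rewrite divr_ge0 ?mulr_ge0 ?ltW.
  + by rewrite divr_ge0 ?ltW ?subr_gt0.
  + rewrite ler_pM2l // lef_pV2 ?posrE ?mulr_gt0 //.
    rewrite r2def.
    nra.
  + rewrite ler_pdivrMr ?subr_gt0 // mulrAC ler_pdivlMr ?subr_gt0 //.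
    nra.
Qed.

End Helpers.

Theorem lemma2 (R : realType) (V0 a1 a2 d1 mu : R) :
  0 < V0 -> 0 < a1 -> 0 < a2 -> 1 < mu ->
  let g1 := 1 + mu^-1 in
  let g2 := 1 - mu^-1 in
  let I := integralI V0 a1 a2 d1 g1 g2 in
  ((0 <= d1 -> d1 < 2 * Num.sqrt (a1 * a2) ->
    let k1 := Num.sqrt ((4 * a1 * a2 - d1 ^+ 2) / (4 * a1 ^+ 2)) in
    let k2 := - (d1 / Num.sqrt (4 * a1 * a2 - d1 ^+ 2)) in
    (I <= (mu / (a1 * k1) * (pi / 2 - atan k2))%:E)%E)
  /\
  (forall k : R, 0 < k < 1 ->
    2 * Num.sqrt (a1 * a2) <= d1 ->
    V0 `^ (mu^-1) <= k * ((d1 - Num.sqrt (d1 ^+ 2 - 4 * a1 * a2)) / (2 * a1)) ->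
    (I <= (mu * k / ((1 - k) * Num.sqrt (a1 * a2)))%:E)%E)).
Proof.
move=> V0p a1p a2p mu1 g1 g2 I; split.
- by move=> d0 dlt; exact: Helpers.part1.
- by move=> k hk dge hV; exact: Helpers.part2.
Qed.
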